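(* Let $(X,G)$ be a dislocation space with $X$ a reflexive Banach space, and let $(u_n)$ be a bounded sequence in $X$. Let $L\in\mathbb{N}_0$, and let sequences $(g^{(l)}_n)_n\subset G$ and elements $w^{(l)}\in X$ ($l=0,\dots,L$) satisfy $g^{(0)}_n=\mathrm{Id}_X$, $(g^{(l)}_n)^{-1}u_n\to w^{(l)}$ weakly in $X$ for $l=0,\dots,L$, and $(g^{(l)}_n)^{-1}g^{(m)}_n\rightharpoonup 0$ operator-weakly whenever $0\le l<m\le L$, as $n\to\infty$. Assume there is a sequence $(g^{(L+1)}_n)\subset G$ such that, along a subsequence, $$(g^{(L+1)}_n)^{-1}\Big(u_n-\sum_{l=0}^L g^{(l)}_nw^{(l)}\Big)\to w^{(L+1)}\neq0\quad\text{weakly in }X.$$ Then, along this subsequence, $(g^{(l)}_n)^{-1}g^{(L+1)}_n\rightharpoonup0$ operator-weakly as $n\to\infty$ for every $l=0,\dots,L$.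
   Context: Dislocation space: a Banach space $X$ with a group $G\subset\mathcal{B}(X)$ (under composition) of bijective linear isometries such that (1) every $(g_n)\subset G$ with $g_n\not\rightharpoonup0$ has an operator-strongly convergent subsequence (limit in $\mathcal{B}(X)$), and (2) for every $(g_n)\subset G$ with $g_n\not\rightharpoonup0$ and every $(u_n)\subset X$ with $u_n\to0$ weakly, there is a subsequence with $g_{n_j}u_{n_j}\to0$ weakly. Here $A_n\rightharpoonup A$ (operator-weakly) means $A_nu\to Au$ weakly for all $u\in X$, and operator-strong convergence means $A_nu\to Au$ in norm for all $u$. *)

(* Defs.v *)
From HB Require Import structures.
From mathcomp Require Import all_boot all_order all_algebra.
From mathcomp Require Import all_classical all_reals all_analysis.
Import Order.TTheory GRing.Theory Num.Theory.
Import numFieldNormedType.Exports.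
Set Implicit Arguments. Unset Strict Implicit. Unset Printing Implicit Defensive.
Local Open Scope ring_scope.
Local Open Scope classical_set_scope.

Definition lin_functional {R : realType} {X : normedModType R} (f : X -> R) :=
  (forall (a : R) (x y : X), f (a *: x + y) = a * f x + f y) /\ continuous f.

Definition weak_cvg {R : realType} {X : normedModType R} (u : nat -> X) (w : X) :=
  forall f : X -> R, lin_functional f -> (fun n => f (u n)) @ \oo --> f w.

Definition bounded_op {R : realType} {X : normedModType R} (A : X -> X) :=
  (forall (a : R) (x y : X), A (a *: x + y) = a *: A x + A y) /\ continuous A.

Definition op_weak_cvg {R : realType} {X : normedModType R}
  (A : nat -> X -> X) (B : X -> X) := forall u : X, weak_cvg (fun n => A n u) (B u).

Definition op_strong_cvg {R : realType} {X : normedModType R}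
  (A : nat -> X -> X) (B : X -> X) := forall u : X, (fun n => A n u) @ \oo --> B u.

Definition ginv {R : realType} {X : normedModType R} (g : X -> X) : X -> X :=
  fun y => xget 0 [set x | g x = y].

Definition isometry {R : realType} {X : normedModType R} (g : X -> X) :=
  forall x : X, `|g x| = `|x|.

Definition strictly_incr (phi : nat -> nat) := forall m n, (m < n)%N -> (phi m < phi n)%N.

Definition dislocation_space {R : realType} {X : normedModType R} (G : set (X -> X)) :=
  (forall g, G g -> bounded_op g /\ bijective g /\ isometry g) /\
  G id /\ (forall g h, G g -> G h -> G (g \o h)) /\ (forall g, G g -> G (ginv g)) /\
  (* (1) *)
  (forall gs : nat -> X -> X, (forall n, G (gs n)) ->
     ~ op_weak_cvg gs (fun _ => 0) ->
     exists phi, strictly_incr phi /\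
       exists A : X -> X, bounded_op A /\ op_strong_cvg (fun j => gs (phi j)) A) /\
  (* (2) *)
  (forall (gs : nat -> X -> X) (u : nat -> X), (forall n, G (gs n)) ->
     ~ op_weak_cvg gs (fun _ => 0) -> weak_cvg u 0 ->
     exists phi, strictly_incr phi /\ weak_cvg (fun j => gs (phi j) (u (phi j))) 0).

(* |Phi f| <= C ||f||_{X*}, unfolded: ||f||_{X*} is the infimum of the M with
   |f x| <= M ||x|| for all x *)
Definition reflexive_space {R : realType} (X : normedModType R) :=
  forall Phi : (X -> R) -> R,
    (forall (a : R) (f g : X -> R), lin_functional f -> lin_functional g ->
       Phi (fun x => a * f x + g x) = a * Phi f + Phi g) ->
    (exists C : R, forall (f : X -> R) (M : R), lin_functional f ->
       (forall x, `|f x| <= M * `|x|) -> `|Phi f| <= C * M) ->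
    exists x : X, forall f, lin_functional f -> Phi f = f x.

(* Main.v *)
Require Import Defs.
From HB Require Import structures.
From mathcomp Require Import all_boot all_order all_algebra.
From mathcomp Require Import all_classical all_reals all_analysis.
Import Order.TTheory GRing.Theory Num.Theory.
Import numFieldNormedType.Exports.
Local Open Scope ring_scope.
Local Open Scope classical_set_scope.
From mathcomp Require Import lra.
Section HB.
Context {R : realType} {X : normedModType R}.

Definition good0 (A : set (X * R)) :=
  [/\ (forall x a b, A (x, a) -> A (x, b) -> a = b),
      (forall (c : R) x y a b, A (x, a) -> A (y, b) -> A (c *: x + y, c * a + b)) &
      (forall x a, A (x, a) -> a <= `|x|)].

Definition ext (A : set (X * R)) (x0 : X) (c : R) : set (X * R) :=
  [set z | exists s a t, A (s, a) /\ z = (s + t *: x0, a + t * c)].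

Lemma good0_00 A x a : good0 A -> A (x, a) -> A (0, 0).
Proof.
move=> [_ Hb _] Ax.
have := Hb (-1) x x a a Ax Ax.
by rewrite scaleN1r addNr mulN1r addNr.
Qed.

Lemma ext_good0 A x0 c : good0 A -> A (0, 0) -> ~ (exists a, A (x0, a)) ->
  (forall s a t, A (s, a) -> a + t * c <= `|s + t *: x0|) -> good0 (ext A x0 c).
Proof.
move=> [Ha Hb Hd] A00 nx0 dom; split.
- move=> x a b [s1 [a1 [t1 [A1 /pair_equal_spec[e1 e1']]]]]
              [s2 [a2 [t2 [A2 /pair_equal_spec[e2 e2']]]]].
  have [t12|t12] := eqVneq t1 t2.
    subst t2; move: e1; rewrite e2 => /addIr es; subst s2.
    by rewrite e1' e2' (Ha _ _ _ A1 A2).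
  exfalso; apply: nx0.
  have A21 := Hb (-1) _ _ _ _ A1 A2.
  have := Hb ((t1 - t2)^-1) _ _ _ _ A21 A00.
  rewrite addr0 => H; eexists; move: H; congr (A (_, _)).
  have -> : -1 *: s1 + s2 = (t1 - t2) *: x0.
    have E : s1 + t1 *: x0 = s2 + t2 *: x0 by rewrite -e1 -e2.
    by rewrite scaleN1r scalerBl -[t1 *: x0](addKr s1) E addrA addrK addrC.
  by rewrite scalerA mulVf ?scale1r // subr_eq0.
- move=> c' x y a b [s1 [a1 [t1 [A1 /pair_equal_spec[-> ->]]]]]
              [s2 [a2 [t2 [A2 /pair_equal_spec[-> ->]]]]].
  exists (c' *: s1 + s2), (c' * a1 + a2), (c' * t1 + t2); split; first exact: Hb.
  congr pair.
    by rewrite scalerDr scalerA scalerDl addrACA.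
  by rewrite mulrDr mulrA mulrDl addrACA.
- move=> x a [s [a1 [t [A1 /pair_equal_spec[-> ->]]]]].
  exact: dom.
Qed.
End HB.
Section HB2.
Context {R : realType} {X : normedModType R}.

Lemma choose_c (A : set (X * R)) x0 : good0 A -> A (0, 0) ->
  exists c, forall s a t, A (s, a) -> a + t * c <= `|s + t *: x0|.
Proof.
move=> [Ha Hb Hd] A00.
have KEY s1 a1 s2 a2 : A (s1, a1) -> A (s2, a2) ->
    a1 - `|s1 - x0| <= `|s2 + x0| - a2.
  move=> A1 A2; have := Hd _ _ (Hb 1 _ _ _ _ A1 A2); rewrite scale1r mul1r.
  have : `|s1 + s2| <= `|s1 - x0| + `|s2 + x0|.
    by rewrite [s1 + s2](_ : _ = (s1 - x0) + (s2 + x0)) ?ler_normD // addrACA addNr addr0.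
  lra.
pose S := [set r | exists s a, A (s, a) /\ r = a - `|s - x0|].
have S0 : S !=set0 by exists (0 - `|0 - x0|); exists 0, 0.
have ubS s2 a2 : A (s2, a2) -> ubound S (`|s2 + x0| - a2).
  by move=> A2 r [s [a [As ->]]]; exact: KEY.
have hsS : has_sup S by split => //; exists (`|0 + x0| - 0); exact: ubS.
exists (sup S) => s a t As.
have low s' a' : A (s', a') -> a' - `|s' - x0| <= sup S.
  by move=> A'; apply: sup_upper_bound => //; exists s', a'.
have up s' a' : A (s', a') -> sup S <= `|s' + x0| - a'.
  by move=> A'; apply: ge_sup => //; exact: ubS.
have Asc r : A (r *: s, r * a).
  by have := Hb r _ _ _ _ As A00; rewrite addr0 addr0.
have [t0|t0|->] := ltgtP t 0; last by rewrite mul0r addr0 scale0r addr0; exact: Hd.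
- pose r := - t; have r0 : 0 < r by rewrite /r oppr_gt0.
  have := low _ _ (Asc r^-1).
  have E : `|s + t *: x0| = r * `|r^-1 *: s - x0|.
    rewrite -[r in r * _]gtr0_norm // -normrZ scalerBr scalerA mulfV ?gt_eqF //.
    by rewrite scale1r /r scaleNr opprK.
  rewrite E => H.
  have : r * (r^-1 * a - `|r^-1 *: s - x0|) <= r * sup S by rewrite ler_pM2l.
  rewrite mulrBr mulrA mulfV ?gt_eqF // mul1r /r.
  lra.
- have := up _ _ (Asc t^-1).
  have E : `|s + t *: x0| = t * `|t^-1 *: s + x0|.
    rewrite -[t in t * _]gtr0_norm // -normrZ scalerDr scalerA mulfV ?gt_eqF //.
    by rewrite scale1r.
  rewrite E => H.
  have : t * sup S <= t * (`|t^-1 *: s + x0| - t^-1 * a) by rewrite ler_pM2l.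
  rewrite mulrBr [t * (t^-1 * a)]mulrA mulfV ?gt_eqF // mul1r.
  lra.
Qed.
End HB2.
Section HB3.
Context {R : realType} {X : normedModType R}.

Lemma hb_sep (w : X) : w != 0 -> exists f : X -> R, lin_functional f /\ f w != 0.
Proof.
move=> w0.
pose good (A : set (X * R)) := good0 A /\ (forall z, A z -> A (w, `|w|)).
have chainP : forall F : set (set (X * R)), F `<=` good -> total_on F subset ->
    good (\bigcup_(Y in F) Y).
  move=> F FP Ftot.
  have two z1 z2 : (\bigcup_(Y in F) Y) z1 -> (\bigcup_(Y in F) Y) z2 ->
      exists Y, [/\ F Y, Y z1 & Y z2].
    move=> [Y1 FY1 Y1z] [Y2 FY2 Y2z].
    have [S12|S21] := Ftot _ _ FY1 FY2.
      by exists Y2; split => //; exact: S12.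
    by exists Y1; split => //; exact: S21.
  split; first split.
  - move=> x a b H1 H2; have [Y [FY Y1 Y2]] := two _ _ H1 H2.
    by have [[Ha _ _] _] := FP _ FY; exact: Ha Y1 Y2.
  - move=> c x y a b H1 H2; have [Y [FY Y1 Y2]] := two _ _ H1 H2.
    have [[_ Hb _] _] := FP _ FY; exists Y => //; exact: Hb.
  - move=> x a [Y FY YA]; have [[_ _ Hd] _] := FP _ FY; exact: Hd YA.
  - move=> z [Y FY Yz]; have [_ He] := FP _ FY; exists Y => //; exact: He Yz.
have [A [[[Ha Hb Hd] He] Amax]] := Zorn_bigcup chainP.
have Aw : A (w, `|w|).
  have [[z Az]|nA] := pselect (exists z, A z); first exact: He Az.
  exfalso.
  pose A0 : set (X * R) := [set (0, 0)].
  have g0 : good0 A0.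
    split.
    - by move=> x a b /pair_equal_spec[_ ->] /pair_equal_spec[_ ->].
    - move=> c x y a b /pair_equal_spec[-> ->] /pair_equal_spec[-> ->].
      by rewrite /A0 /= scaler0 mulr0 !addr0.
    - by move=> x a /pair_equal_spec[-> ->]; rewrite normr0.
  have gE := @ext_good0 _ _ A0 w `|w| g0 erefl.
  have wE : ext A0 w `|w| (w, `|w|).
    by exists 0, 0, 1; split => //; rewrite add0r scale1r add0r mul1r.
  apply: (Amax (ext A0 w `|w|)); last first.
    split; last by move=> z _; exact: wE.
    apply: gE.
      by move=> [a /pair_equal_spec[/eqP]]; rewrite (negbTE w0).
    move=> s a t /pair_equal_spec[-> ->].
    by rewrite !add0r normrZ ler_wpM2r // ler_norm.
  split; first by move=> z Az; exfalso; apply: nA; exists z.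
  by move=> H; apply: nA; exists (w, `|w|); exact: H.
have A00 : A (0, 0) by apply: (@good0_00 _ _ A w `|w|).
have tot x0 : exists a, A (x0, a).
  apply: contrapT => nx.
  have [c dom] := @choose_c _ _ A x0 (And3 Ha Hb Hd) A00.
  have gE := @ext_good0 _ _ A x0 c (And3 Ha Hb Hd) A00 nx dom.
  have AE : A `<=` ext A x0 c.
    by move=> [s a] As; exists s, a, 0; split => //; rewrite scale0r mul0r !addr0.
  apply: (Amax (ext A x0 c)); last first.
    by split => // z _; apply: AE.
  split => // H; apply: nx; exists c; apply: H.
  by exists 0, 0, 1; split => //; rewrite add0r scale1r add0r mul1r.
pose f x := xget 0 [set a | A (x, a)].
have Hf x : A (x, f x) by exact: (xgetPex 0 (tot x)).
have flin a x y : f (a *: x + y) = a * f x + f y.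
  exact: Ha (Hf _) (Hb _ _ _ _ _ (Hf x) (Hf y)).
have fB x z : f x - f z = f (x - z).
  have := flin (-1) z x; rewrite scaleN1r mulN1r addrC => ->.
  by rewrite addrC.
have fle v : `|f v| <= `|v|.
  rewrite ler_norml Hd // andbT.
  have := Hd _ _ (Hf (- v)); rewrite normrN.
  have := flin (-1) v 0; rewrite scaleN1r mulN1r addr0.
  have f00 : f 0 = 0 := Ha _ _ _ (Hf 0) A00.
  rewrite f00 addr0 => ->; rewrite lerNl.
  done.
exists f; split; last first.
  rewrite (Ha _ _ _ (Hf w) Aw); by rewrite normr_eq0.
split => // x; apply/cvgrPdist_lt => e e0; near=> z.
rewrite fB (le_lt_trans (fle _)) //; near: z.
Unshelve. all: by end_near.
Qed.
End HB3.
Section Gen.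
Context {R : realType} {X : normedModType R}.
Implicit Types (f : X -> R) (A g : X -> X) (u v : nat -> X).

Lemma si_ge p : strictly_incr p -> forall j, (j <= p j)%N.
Proof.
move=> sp; elim=> [//|j IH]; apply: leq_ltn_trans IH _; exact: sp.
Qed.

Lemma si_cvg p : strictly_incr p -> p @ \oo --> \oo.
Proof.
move=> sp; apply/cvgnyPge => N; near=> j.
apply: (@leq_trans j); last exact: si_ge sp j.
near: j; exact: nbhs_infty_ge.
Unshelve. all: by end_near.
Qed.

Lemma si_comp p q : strictly_incr p -> strictly_incr q -> strictly_incr (p \o q).
Proof. by move=> sp sq m n mn; apply: sp; apply: sq. Qed.

Lemma lf0 f : lin_functional f -> f 0 = 0.
Proof.
move=> [Hl _]; have := Hl 1 0 0; rewrite scale1r addr0 mul1r => H.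
by apply: (@addrI _ (f 0)); rewrite addr0 -H.
Qed.

Lemma lfD f x y : lin_functional f -> f (x + y) = f x + f y.
Proof. by move=> [Hl Hc]; have := Hl 1 x y; rewrite scale1r mul1r. Qed.

Lemma lfZ f a x : lin_functional f -> f (a *: x) = a * f x.
Proof.
move=> hf; have [Hl _] := hf; have := Hl a x 0; rewrite !addr0 (lf0 _ hf) addr0.
done.
Qed.

Lemma lfN f x : lin_functional f -> f (- x) = - f x.
Proof. by move=> hf; rewrite -scaleN1r lfZ // mulN1r. Qed.

Lemma lfB f x y : lin_functional f -> f (x - y) = f x - f y.
Proof. by move=> hf; rewrite lfD // lfN. Qed.

Lemma lf_sum f n (F : 'I_n -> X) : lin_functional f ->
  f (\sum_(i < n) F i) = \sum_(i < n) f (F i).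
Proof.
move=> hf; elim: n F => [|n IH] F; first by rewrite !big_ord0 lf0.
by rewrite !big_ord_recr /= lfD // IH.
Qed.

Lemma bo0 A : bounded_op A -> A 0 = 0.
Proof.
move=> [Hl _]; have := Hl 1 0 0; rewrite scale1r addr0 scale1r => H.
by apply: (@addrI _ (A 0)); rewrite addr0 -H.
Qed.

Lemma boD A x y : bounded_op A -> A (x + y) = A x + A y.
Proof. by move=> [Hl Hc]; have := Hl 1 x y; rewrite !scale1r. Qed.

Lemma boZ A a x : bounded_op A -> A (a *: x) = a *: A x.
Proof.
move=> hf; have [Hl _] := hf; have := Hl a x 0; rewrite !addr0 (bo0 _ hf) addr0.
done.
Qed.

Lemma boN A x : bounded_op A -> A (- x) = - A x.
Proof. by move=> hf; rewrite -scaleN1r boZ // scaleN1r. Qed.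

Lemma boB A x y : bounded_op A -> A (x - y) = A x - A y.
Proof. by move=> hf; rewrite boD // boN. Qed.

Lemma bo_sum A n (F : 'I_n -> X) : bounded_op A ->
  A (\sum_(i < n) F i) = \sum_(i < n) A (F i).
Proof.
move=> hf; elim: n F => [|n IH] F; first by rewrite !big_ord0 bo0.
by rewrite !big_ord_recr /= boD // IH.
Qed.

Lemma wc_sub u a p : strictly_incr p -> weak_cvg u a -> weak_cvg (u \o p) a.
Proof.
move=> sp hu f hf; have := hu f hf.
by move=> H; exact: (cvg_comp p (fun n => f (u n)) (si_cvg _ sp) H).
Qed.

Lemma wc_cst (a : X) : weak_cvg (fun _ => a) a.
Proof. by move=> f hf; apply: cvg_cst. Qed.

Lemma wc_B u v a b : weak_cvg u a -> weak_cvg v b ->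
  weak_cvg (fun n => u n - v n) (a - b).
Proof.
move=> hu hv f hf; rewrite lfB //.
have -> : (fun n => f (u n - v n)) = (fun n => f (u n)) - (fun n => f (v n)).
  by apply: funext => n; rewrite lfB.
exact: cvgB (hu f hf) (hv f hf).
Qed.

Lemma wc_sum n (F : 'I_n -> nat -> X) (a : 'I_n -> X) :
  (forall i, weak_cvg (F i) (a i)) ->
  weak_cvg (fun k => \sum_(i < n) F i k) (\sum_(i < n) a i).
Proof.
move=> hF f hf; rewrite lf_sum //.
have -> : (fun k => f (\sum_(i < n) F i k)) = (fun k => \sum_(i < n) f (F i k)).
  by apply: funext => k; rewrite lf_sum.
elim: n F a hF => [|n IH] F a hF.
  rewrite big_ord0; under eq_fun do rewrite big_ord0; exact: cvg_cst.
rewrite big_ord_recr /=; under eq_fun do rewrite big_ord_recr /=.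
apply: cvgD; last exact: hF.
exact: (IH (fun i => F (widen_ord (leqnSn n) i)) (fun i => a (widen_ord (leqnSn n) i))).
Qed.

Lemma wc_unique u a b f : lin_functional f -> weak_cvg u a -> weak_cvg u b ->
  f a = f b.
Proof. by move=> hf ha hb; exact: (cvg_unique _ (ha f hf) (hb f hf)). Qed.

Lemma lf_bound f : lin_functional f -> exists C, forall x, `|f x| <= C * `|x|.
Proof.
move=> hf; have [_ Hc] := hf.
have := Hc 0; move/cvgrPdist_lt => /(_ 1 ltr01); rewrite (lf0 _ hf).
move/nbhs_norm0P => [d /= d0 Hd].
exists (2 / d) => x.
have [->|x0] := eqVneq x 0; first by rewrite (lf0 _ hf) !normr0 mulr0.
have nx0 : 0 < `|x| by rewrite normr_gt0.
pose k := d / (2 * `|x|).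
have k0 : 0 < k by rewrite /k divr_gt0 // mulr_gt0.
have : `|0 - f (k *: x)| < 1.
  apply: Hd; rewrite /= normrZ gtr0_norm // /k -mulrA.
  rewrite invfM -mulrA mulVf ?gt_eqF // mulr1.
  by rewrite ltr_pdivrMr // ltr_pMr // ltr1n.
rewrite sub0r normrN lfZ // normrM gtr0_norm // => H.
have : `|f x| < k^-1 by rewrite -(ltr_pM2l k0) mulfV ?gt_eqF.
rewrite /k invf_div => H2; apply: ltW; move: H2.
by rewrite mulrAC.
Qed.

Lemma ginvK g y : bijective g -> g (ginv g y) = y.
Proof.
move=> [h gh hg]; rewrite /ginv.
have : [set x | g x = y] (xget 0 [set x | g x = y]).
  by apply: xgetPex; exists (h y); exact: hg.
done.
Qed.

Lemma ginv_eq g x y : bijective g -> g x = y -> ginv g y = x.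
Proof.
move=> bg gx; have := ginvK _ y bg; rewrite -gx => H.
by have [h gh hg] := bg; rewrite -[LHS]gh H gh.
Qed.

Lemma ginvKl g x : bijective g -> ginv g (g x) = x.
Proof. by move=> bg; apply: ginv_eq. Qed.

End Gen.
Section Disl.
Context {R : realType} {X : normedModType R} {G : set (X -> X)}.
Hypothesis DS : dislocation_space G.

Lemma all_zero : (forall f (x : X), lin_functional f -> f x = 0) ->
  forall gs : nat -> X -> X, op_weak_cvg gs (fun _ => 0).
Proof.
move=> Z gs u f hf; rewrite (Z f 0 hf).
have -> : (fun n => f (gs n u)) = (fun _ => 0) by apply: funext => n; exact: Z.
exact: cvg_cst.
Qed.

Lemma lf_bound_pos (f : X -> R) : lin_functional f ->
  exists2 C, 0 < C & forall x, `|f x| <= C * `|x|.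
Proof.
move=> hf; have [C HC] := lf_bound _ hf; exists (`|C| + 1).
  by rewrite ltr_wpDl.
move=> x; apply: (le_trans (HC x)); apply: ler_wpM2r => //.
by rewrite (le_trans (ler_norm C)) // lerDl.
Qed.

Lemma INV (gs : nat -> X -> X) : (forall n, G (gs n)) ->
  op_weak_cvg gs (fun _ => 0) -> op_weak_cvg (fun n => ginv (gs n)) (fun _ => 0).
Proof.
have [HG [Gid [Gcomp [Ginv [D1 D2]]]]] := DS.
move=> Gs hw; apply: contrapT => nw.
have [psi [spsi [A [bA sA]]]] := D1 _ (fun n => Ginv _ (Gs n)) nw.
apply: nw; apply: all_zero => f x hf.
have [C C0 HC] := lf_bound_pos _ hf.
pose s1 := fun j => f (gs (psi j) (A x)).
pose s2 := fun j => f (gs (psi j) (ginv (gs (psi j)) x - A x)).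
have c1 : s1 @ \oo --> 0.
  rewrite -(lf0 _ hf); exact: (wc_sub _ _ _ spsi (hw (A x))) f hf.
have c2 : s2 @ \oo --> 0.
  apply/cvgrPdist_lt => e e0.
  have := sA x; move/cvgrPdist_lt => /(_ (e / C)); rewrite divr_gt0 //.
  move=> /(_ isT); apply: filterS => j Hj.
  rewrite sub0r normrN /s2 (le_lt_trans (HC _)) //.
  have [bg [_ ig]] := HG _ (Gs (psi j)).
  rewrite ig -ltr_pdivlMl // mulrC distrC; exact: Hj.
have E : (fun _ => f x) = s1 + s2.
  apply: funext => j; rewrite /s1 /s2 /=.
  have [bg [bj _]] := HG _ (Gs (psi j)).
  change (f x = f (gs (psi j) (A x)) + f (gs (psi j) (ginv (gs (psi j)) x - A x))).
  by rewrite -(lfD f _ _ hf) -(boD _ _ _ bg) addrC subrK ginvK.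
have : (fun _ : nat => f x) @ \oo --> 0 by rewrite E -[0]addr0; exact: cvgD.
move=> H; exact: (cvg_unique _ (cvg_cst _) H).
Qed.

End Disl.
Theorem mainTheorem6 (R : realType) (X : completeNormedModType R)
  (G : set (X -> X)) (u : nat -> X) (L : nat)
  (g : nat -> nat -> X -> X) (w : nat -> X)
  (gL1 : nat -> X -> X) (phi : nat -> nat) (wL1 : X) :
  dislocation_space G ->
  reflexive_space X ->
  (exists M : R, forall n, `|u n| <= M) ->
  (forall l n, (l <= L)%N -> G (g l n)) ->
  (forall n, g 0%N n = id) ->
  (forall l, (l <= L)%N -> weak_cvg (fun n => ginv (g l n) (u n)) (w l)) ->
  (forall l m, (l < m)%N -> (m <= L)%N ->
     op_weak_cvg (fun n => ginv (g l n) \o g m n) (fun _ => 0)) ->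
  (forall n, G (gL1 n)) ->
  strictly_incr phi ->
  weak_cvg (fun j => ginv (gL1 (phi j))
                        (u (phi j) - \sum_(l < L.+1) g l (phi j) (w l))) wL1 ->
  wL1 != 0 ->
  forall l, (l <= L)%N ->
    op_weak_cvg (fun j => ginv (g l (phi j)) \o gL1 (phi j)) (fun _ => 0).
Proof.
move=> DS _ _ Gg _ hw hop GL1 sphi hL1 wL10 l lL.
have [HG [Gid [Gcomp [Ginv [D1 D2]]]]] := DS.
apply: contrapT => nh.
pose k := fun j => ginv (gL1 (phi j)) \o g l (phi j).
have Gk j : G (k j) by apply: Gcomp; [apply: Ginv; apply: GL1 | apply: Gg].
have nk : ~ op_weak_cvg k (fun _ => 0).
  move=> hk; apply: nh => u0 f hf.
  have := INV DS _ Gk hk u0 f hf.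
  have -> // : (fun n => f (ginv (k n) u0)) =
      (fun n => f ((ginv (g l (phi n)) \o gL1 (phi n)) u0)).
  apply: funext => n; congr (f _); apply: ginv_eq.
    by have [_ [bk _]] := HG _ (Gk n).
  have [_ [bl _]] := HG _ (Gg l (phi n) lL).
  have [_ [b1 _]] := HG _ (GL1 (phi n)).
  by rewrite /k /= ginvK // ginvKl.
pose v := fun j => ginv (g l (phi j)) (u (phi j) - \sum_(m < L.+1) g m (phi j) (w m)).
have kv : weak_cvg (fun j => k j (v j)) wL1.
  have -> // : (fun j => k j (v j)) = (fun j => ginv (gL1 (phi j))
                        (u (phi j) - \sum_(l < L.+1) g l (phi j) (w l))).
  apply: funext => j; rewrite /k /v /= ginvK //.
  by have [_ [bl _]] := HG _ (Gg l (phi j) lL).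
have lL' : (l < L.+1)%N by [].
pose l' := Ordinal lL'.
pose a := fun m : 'I_L.+1 => if m == l' then w l else 0.
have suma : \sum_(m < L.+1) a m = w l.
  by rewrite /a -big_mkcond /= big_pred1_eq.
have v0 : weak_cvg v 0.
  have -> : v = (fun j => ginv (g l (phi j)) (u (phi j)) -
          \sum_(m < L.+1) ginv (g l (phi j)) (g m (phi j) (w m))).
    apply: funext => j; rewrite /v.
    have [bo _] := HG _ (Ginv _ (Gg l (phi j) lL)).
    by rewrite (boB _ _ _ bo) (bo_sum _ _ _ bo).
  have h1 := wc_sub _ _ _ sphi (hw l lL).
  suff h2 : weak_cvg (fun j => \sum_(m < L.+1) ginv (g l (phi j)) (g m (phi j) (w m))) (w l).
    by move: (wc_B _ _ _ _ h1 h2); rewrite (subrr (w l)).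
  rewrite -suma; apply: (@wc_sum R X L.+1 (fun (m : 'I_L.+1) j => ginv (g l (phi j)) (g m (phi j) (w m))) a) => m.
  have mL : (m <= L)%N by rewrite -ltnS ltn_ord.
  rewrite /a; case: eqP => [->|ml].
    have -> : (fun k => ginv (g l (phi k)) (g l' (phi k) (w l'))) = (fun _ => w l).
      apply: funext => j; rewrite ginvKl //.
      by have [_ [bl _]] := HG _ (Gg l (phi j) lL).
    exact: wc_cst.
  have ml' : (val m != l)%N.
    by apply/eqP => E; apply: ml; apply: val_inj.
  have [lm|ml2] := ltnP l m.
    exact: (wc_sub _ _ _ sphi (hop l m lm mL (w m))).
  have ml3 : (m < l)%N by rewrite ltn_neqAle ml' ml2.
  pose gs := fun n => ginv (g m n) \o g l n.
  have Ggs n : G (gs n) by apply: Gcomp; [apply: Ginv; apply: Gg | apply: Gg].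
  have H := INV DS _ Ggs (hop m l ml3 lL) (w m).
  have -> : (fun k => ginv (g l (phi k)) (g m (phi k) (w m))) =
            (fun k => ginv (gs (phi k)) (w m)).
    apply: funext => j; apply: esym; apply: ginv_eq.
      by have [_ [bk _]] := HG _ (Ggs (phi j)).
    have [_ [bl _]] := HG _ (Gg l (phi j) lL).
    have [_ [bm _]] := HG _ (Gg m (phi j) mL).
    by rewrite /gs /= ginvK // ginvKl.
  exact: (wc_sub _ _ _ sphi H).
have [psi [spsi Hpsi]] := D2 k v Gk nk v0.
have [f [hf fw]] := hb_sep _ wL10.
have := wc_unique _ _ _ _ hf (wc_sub _ _ _ spsi kv) Hpsi.
rewrite (lf0 _ hf) => /eqP; by rewrite (negbTE fw).
Qed.
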